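(* Let $\ell,n_1,\dots,n_\ell$ be positive integers and $K_1,\dots,K_\ell$ finite fields, and let $\mathcal{P}(\mathbf{K}^{\mathbf{n}})=\mathcal{P}(K_1^{n_1})\times\cdots\times\mathcal{P}(K_\ell^{n_\ell})$. Let $\rho:\mathcal{P}(\mathbf{K}^{\mathbf{n}})\to\mathbb{Z}_{\geq 0}$ be a rank function, i.e. for all $\mathcal{L},\mathcal{L}'$: (R1) $0\le\rho(\mathcal{L})\le\mathrm{Rk}(\mathcal{L})$; (R2) $\mathcal{L}\subseteq\mathcal{L}'$ implies $\rho(\mathcal{L})\le\rho(\mathcal{L}')$; (R3) $\rho(\mathcal{L}+\mathcal{L}')+\rho(\mathcal{L}\cap\mathcal{L}')\le\rho(\mathcal{L})+\rho(\mathcal{L}')$. Define $\rho^*(\mathcal{L})=\rho(\mathcal{L}^\perp)+\mathrm{Rk}(\mathcal{L})-\rho(\mathbf{K}^{\mathbf{n}})$. Then $\rho^*$ is also a rank function on $\mathcal{P}(\mathbf{K}^{\mathbf{n}})$, i.e. it satisfies (R1), (R2), (R3).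
   Context: $\mathcal{P}(K_i^{n_i})$ denotes the lattice of $K_i$-linear subspaces of $K_i^{n_i}$. Elements of $\mathcal{P}(\mathbf{K}^{\mathbf{n}})$ are tuples $\mathcal{L}=(\mathcal{L}_1,\dots,\mathcal{L}_\ell)$; inclusion $\subseteq$, sum $+$, intersection $\cap$ and orthogonal complement $\mathcal{L}^\perp=(\mathcal{L}_1^\perp,\dots,\mathcal{L}_\ell^\perp)$ are taken componentwise, where $\mathcal{L}_i^\perp$ is the orthogonal complement in $K_i^{n_i}$ with respect to the standard bilinear form. $\mathrm{Rk}(\mathcal{L})=\sum_{i=1}^\ell\dim_{K_i}\mathcal{L}_i$, and $\mathbf{K}^{\mathbf{n}}=(K_1^{n_1},\dots,K_\ell^{n_\ell})$ is the top element. *)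

(* Defs.v *)
From HB Require Import structures.
From mathcomp Require Import all_boot all_order all_algebra.
Set Implicit Arguments. Unset Strict Implicit. Unset Printing Implicit Defensive.
Import GRing.Theory.
Local Open Scope ring_scope.

(* An element of P(K^n) = P(K_1^{n_1}) x ... x P(K_l^{n_l}) : a tuple of
   subspaces, the i-th one a subspace of the row space K_i^{n_i}. *)
Definition lat (l : nat) (K : 'I_l -> finFieldType) (n : 'I_l -> nat) :=
  forall i : 'I_l, {vspace 'rV[K i]_(n i)}.

(* Orthogonal complement w.r.t. the standard bilinear form <u,v> = u v^T:
   the span of the (finite) set of all vectors orthogonal to every u in U
   (that set is already a subspace, so the span is exactly it). *)
Definition vperp (F : finFieldType) (m : nat) (U : {vspace 'rV[F]_m}) :
    {vspace 'rV[F]_m} :=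
  <<[seq v <- enum 'rV[F]_m | [forall u : 'rV[F]_m, (u \in U) ==> (v *m u^T == 0 :> 'M[F]_(1,1))%R]]>>%VS.

Section Lat.
Variables (l : nat) (K : 'I_l -> finFieldType) (n : 'I_l -> nat).

Definition lle (L L' : lat K n) : Prop := forall i, (L i <= L' i)%VS.
Definition ladd (L L' : lat K n) : lat K n := fun i => (L i + L' i)%VS.
Definition lcap (L L' : lat K n) : lat K n := fun i => (L i :&: L' i)%VS.
Definition lperp (L : lat K n) : lat K n := fun i => vperp (L i).
Definition ltop : lat K n := fun i => fullv.
Definition Rk (L : lat K n) : nat := \sum_(i < l) \dim (L i).

Definition rank_function (rho : lat K n -> int) : Prop :=
  [/\ (forall L, 0 <= rho L /\ rho L <= (Rk L)%:Z),
      (forall L L', lle L L' -> rho L <= rho L') &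
      (forall L L', rho (ladd L L') + rho (lcap L L') <= rho L + rho L')].

Definition dual_rank (rho : lat K n -> int) : lat K n -> int :=
  fun L => rho (lperp L) + (Rk L)%:Z - rho ltop.
End Lat.

(* Main.v *)
Require Import Defs.
From Stdlib Require Import FunctionalExtensionality.
From HB Require Import structures.
From mathcomp Require Import all_boot all_order all_algebra.
From mathcomp Require Import zify.
Set Implicit Arguments. Unset Strict Implicit. Unset Printing Implicit Defensive.
Import GRing.Theory.
Local Open Scope ring_scope.

Section Perp.
Variables (F : finFieldType) (m : nat).

Lemma dim_fullrV k : \dim (fullv : {vspace 'rV[F]_k}) = k.
Proof. rewrite dimvf dim_matrix. exact: mul1r. Qed.

Section OneU.
Variable U : {vspace 'rV[F]_m}.

Definition Bm : 'M[F]_(\dim U, m) := \matrix_(i < \dim U) (vbasis U)`_i.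

Lemma Bm_rank : \rank Bm = \dim U.
Proof.
have N0 : kermx Bm = 0.
  apply/row_matrixP => i; rewrite row0.
  set x := row i (kermx Bm).
  have hx : x *m Bm = 0 by rewrite /x -row_mul mulmx_ker row0.
  move: hx; rewrite mulmx_sum_row.
  under eq_bigr => j _ do rewrite rowK.
  move/(freeP _ _).
  move=> /(_ (basis_free (vbasisP U))) H.
  apply/rowP => j; move: (H j); rewrite /x !mxE => ->; by [].
have := mxrank_ker Bm; rewrite N0 mxrank0.
have := rank_leq_row Bm. lia.
Qed.

Lemma orth_Bm (v : 'rV[F]_m) : (v *m Bm^T == 0) = [forall u : 'rV[F]_m, (u \in U) ==> (v *m u^T == 0)].
Proof.
apply/eqP/forallP.
- move=> H u; apply/implyP => uU.
  have -> : u = (\row_i coord (vbasis U) i u) *m Bm.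
    rewrite mulmx_sum_row {1}(coord_vbasis uU).
    by apply: eq_bigr => i _; rewrite rowK mxE.
  by rewrite trmx_mul mulmxA H mul0mx.
- move=> H; apply/matrixP => a j; rewrite (ord1 a).
  have := H (vbasis U)`_j.
  rewrite vbasis_mem ?mem_nth ?size_tuple //= => /eqP/matrixP/(_ 0 0).
  move=> E; rewrite [RHS]mxE; rewrite [RHS]mxE in E; rewrite -E.
  rewrite !mxE; by apply: eq_bigr => k _; rewrite !mxE.
Qed.

Definition fB : 'Hom('rV[F]_m, 'rV[F]_(\dim U)) := linfun (mulmxr Bm^T).

Lemma vperpE : vperp U = lker fB.
Proof.
apply/subv_anti/andP; split.
- apply/span_subvP => v; rewrite mem_filter => /andP[Hv _].
  by rewrite memv_ker lfunE /= orth_Bm.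
- apply/subvP => v; rewrite memv_ker lfunE /= orth_Bm => Hv.
  by apply: memv_span; rewrite mem_filter Hv mem_enum.
Qed.

Lemma mem_vperp (v : 'rV[F]_m) : (v \in vperp U) = [forall u : 'rV[F]_m, (u \in U) ==> (v *m u^T == 0)].
Proof. by rewrite vperpE memv_ker lfunE /= orth_Bm. Qed.

Lemma dim_vperp : \dim (vperp U) = (m - \dim U)%N.
Proof.
have := limg_ker_dim fB fullv.
rewrite capfv -vperpE.
have -> : (fB @: fullv)%VS = fullv.
  apply/subv_anti/andP; split; first exact: subvf.
  apply/subvP => w _.
  have : (w <= Bm^T)%MS.
    apply: submx_full; by rewrite /row_full mxrank_tr Bm_rank.
  case/submxP => D ->.
  have := memv_img fB (memvf D); by rewrite lfunE.
rewrite !dim_fullrV. move: (\dim (vperp U)) (\dim U) => a b; lia.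
Qed.
End OneU.

Lemma vperpS (U V : {vspace 'rV[F]_m}) : (U <= V)%VS -> (vperp V <= vperp U)%VS.
Proof.
move=> /subvP UV; apply/subvP => v; rewrite !mem_vperp => /forallP H.
apply/forallP => u; apply/implyP => uU; exact: (implyP (H u) (UV _ uU)).
Qed.

Lemma vperp_add (U V : {vspace 'rV[F]_m}) : vperp (U + V) = (vperp U :&: vperp V)%VS.
Proof.
apply/subv_anti/andP; split.
  by rewrite subv_cap !vperpS // ?addvSl ?addvSr.
apply/subvP => v; rewrite memv_cap !mem_vperp => /andP[/forallP H1 /forallP H2].
apply/forallP => w; apply/implyP => /memv_addP [a aU [b bV ->]].
by rewrite linearD /= mulmxDr (eqP (implyP (H1 a) aU)) (eqP (implyP (H2 b) bV)) addr0.
Qed.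

Lemma vperp_cap (U V : {vspace 'rV[F]_m}) : vperp (U :&: V) = (vperp U + vperp V)%VS.
Proof.
apply/eqP; rewrite eq_sym eqEdim subv_add !vperpS ?capvSl ?capvSr //=.
have := dimv_sum_cap (vperp U) (vperp V).
have := dimv_sum_cap U V.
rewrite -vperp_add !dim_vperp.
have := dimvS (subvf (U + V)%VS); have := dimvS (subvf U); have := dimvS (subvf V).
rewrite !dim_fullrV.
move: (\dim (vperp U + vperp V)) (\dim (U + V)) (\dim (U :&: V)) (\dim U) (\dim V) => a b c d e.
lia.
Qed.
End Perp.

Section Main.
Variables (l : nat) (K : 'I_l -> finFieldType) (n : 'I_l -> nat).
Variable rho : lat K n -> int.
Hypothesis hrho : rank_function rho.

Lemma R1 L : 0 <= rho L /\ rho L <= (Rk L)%:Z.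
Proof. by case: hrho => h _ _; apply: h. Qed.
Lemma R2 L L' : lle L L' -> rho L <= rho L'.
Proof. by case: hrho => _ h _; apply: h. Qed.
Lemma R3 L L' : rho (ladd L L') + rho (lcap L L') <= rho L + rho L'.
Proof. by case: hrho => _ _ h; apply: h. Qed.

Lemma key (A B : lat K n) : lle A B -> rho B <= rho A + (Rk B)%:Z - (Rk A)%:Z.
Proof.
move=> AB.
pose C : lat K n := fun i => (B i :\: A i)%VS.
have E : ladd A C = B.
  apply: functional_extensionality_dep => i.
  by rewrite /ladd /C addvC addv_diff; apply/addv_idPl.
have ERk : (Rk A + Rk C)%N = Rk B.
  rewrite /Rk -big_split /=; apply: eq_bigr => i _.
  by rewrite /C -(dimv_cap_compl (B i) (A i)); congr (_ + _)%N; congr (\dim _); apply/esym/capv_idPr; exact: AB.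
have h3 := R3 A C; rewrite E in h3.
have [h1 _] := R1 (lcap A C).
have [_ h2] := R1 C.
move: h1 h2 h3 ERk; move: (rho B) (rho A) (rho C) (rho (lcap A C)) (Rk A) (Rk B) (Rk C).
move=> a b c d e f g; lia.
Qed.

Lemma Rk_perp (L : lat K n) : (Rk (lperp L) + Rk L)%N = Rk (ltop K n).
Proof.
rewrite /Rk -big_split /=; apply: eq_bigr => i _.
rewrite /lperp /ltop dim_vperp dim_fullrV.
have := dimvS (subvf (L i)); rewrite dim_fullrV.
move: (\dim (L i)) => a; lia.
Qed.

Lemma Rk_sum (L L' : lat K n) : (Rk (ladd L L') + Rk (lcap L L'))%N = (Rk L + Rk L')%N.
Proof.
rewrite /Rk -!big_split /=; apply: eq_bigr => i _; exact: dimv_sum_cap.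
Qed.

Lemma dual_rank_ok : rank_function (dual_rank rho).
Proof.
split.
- move=> L; rewrite /dual_rank; split.
  + have := key (A := lperp L) (B := ltop K n) (fun i => subvf _).
    have := Rk_perp L.
    move: (rho (ltop K n)) (rho (lperp L)) (Rk (lperp L)) (Rk L) (Rk (ltop K n)).
    move=> a b c d e; lia.
  + have := R2 (L := lperp L) (L' := ltop K n) (fun i => subvf _).
    move: (rho (ltop K n)) (rho (lperp L)) (Rk L).
    move=> a b c; lia.
- move=> L L' LL'; rewrite /dual_rank.
  have := key (A := lperp L') (B := lperp L) (fun i => vperpS (LL' i)).
  have := Rk_perp L; have := Rk_perp L'.
  move: (rho (ltop K n)) (rho (lperp L)) (rho (lperp L')) (Rk (lperp L)) (Rk (lperp L')) (Rk L) (Rk L') (Rk (ltop K n)).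
  move=> a b c d e f g h; lia.
- move=> L L'; rewrite /dual_rank.
  have E1 : lperp (ladd L L') = lcap (lperp L) (lperp L').
    by apply: functional_extensionality_dep => i; rewrite /lperp /ladd /lcap vperp_add.
  have E2 : lperp (lcap L L') = ladd (lperp L) (lperp L').
    by apply: functional_extensionality_dep => i; rewrite /lperp /ladd /lcap vperp_cap.
  rewrite E1 E2.
  have := R3 (lperp L) (lperp L').
  have := Rk_sum L L'.
  move: (rho (ltop K n)) (rho (lperp L)) (rho (lperp L')) (rho (ladd (lperp L) (lperp L'))) (rho (lcap (lperp L) (lperp L'))).
  move: (Rk (ladd L L')) (Rk (lcap L L')) (Rk L) (Rk L').
  move=> a b c d e f g h i; lia.
Qed.
End Main.

Theorem mainTheorem2 (l : nat) (K : 'I_l -> finFieldType) (n : 'I_l -> nat)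
  (hl : (0 < l)%N) (hn : forall i, (0 < n i)%N)
  (rho : lat K n -> int) :
  rank_function rho -> rank_function (dual_rank rho).
Proof. move=> h; exact: dual_rank_ok. Qed.
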